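(* Let $H \in \mathbb{R}^{r \times n}_+$ be an entrywise nonnegative matrix. Then $H$ satisfies the sufficiently scattered condition (SSC) if and only if both of the following hold: (1) $e - e_i \in \operatorname{cone}(H)$ for all $i \in \{1,\dots,r\}$; (2) the optimal value of $$q^* = \max_{x \in \mathbb{R}^r} \|x\|_2 \ \text{ subject to } \ e^\top x = 1,\ H^\top x \ge 0,\ -1 \le x_i \le 1 \text{ for all } i$$ equals $1$, and the set of optimal solutions of this problem is exactly $\{e_1,\dots,e_r\}$.
   Context: $e \in \mathbb{R}^r$ denotes the all-ones vector, $e_i$ the $i$-th standard unit vector of $\mathbb{R}^r$, $\|\cdot\|_2$ the Euclidean norm, and inequalities between vectors are entrywise. For $H \in \mathbb{R}^{r\times n}$, $\operatorname{cone}(H) = \{ Hy : y \in \mathbb{R}^n, y \ge 0\}$, and its dual cone is $\operatorname{cone}^*(H) = \{ x \in \mathbb{R}^r : x^\top z \ge 0 \ \forall z \in \operatorname{cone}(H)\} = \{x : H^\top x \ge 0\}$. A nonnegative matrix $H \in \mathbb{R}^{r\times n}_+$ satisfies the SSC if (SSC1) $\mathcal{C} = \{ x \in \mathbb{R}^r : e^\top x \ge \sqrt{r-1}\,\|x\|_2\} \subseteq \operatorname{cone}(H)$, and (SSC2) every $q \in \operatorname{cone}^*(H) \cap \{x \in \mathbb{R}^r : e^\top x = \|x\|_2\}$ is a scalar multiple of some unit vector $e_i$. *)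

(* Defs.v *)
From HB Require Import structures.
From mathcomp Require Import all_boot all_order all_algebra.
From mathcomp Require Import reals.
Set Implicit Arguments. Unset Strict Implicit. Unset Printing Implicit Defensive.
Import Order.TTheory GRing.Theory Num.Theory.
Local Open Scope ring_scope.

Section SSCDefs.
Variables (R : realType) (r n : nat).

Definition evec : 'cV[R]_r := const_mx 1.
Definition unitv (i : 'I_r) : 'cV[R]_r := delta_mx i 0.
Definition dotv (x y : 'cV[R]_r) : R := \sum_(i < r) x i 0 * y i 0.
Definition norm2 (x : 'cV[R]_r) : R := Num.sqrt (\sum_(i < r) x i 0 ^+ 2).
Definition nonneg_mx (p q : nat) (A : 'M[R]_(p, q)) : Prop :=
  forall i j, 0 <= A i j.

Definition in_cone (H : 'M[R]_(r, n)) (x : 'cV[R]_r) : Prop :=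
  exists y : 'cV[R]_n, nonneg_mx y /\ x = H *m y.
Definition in_dual_cone (H : 'M[R]_(r, n)) (x : 'cV[R]_r) : Prop :=
  forall z, in_cone H z -> 0 <= dotv x z.

Definition in_C (x : 'cV[R]_r) : Prop :=
  Num.sqrt (r%:R - 1) * norm2 x <= dotv evec x.

Definition SSC1 (H : 'M[R]_(r, n)) : Prop :=
  forall x, in_C x -> in_cone H x.
Definition SSC2 (H : 'M[R]_(r, n)) : Prop :=
  forall q, in_dual_cone H q -> dotv evec q = norm2 q ->
    exists i : 'I_r, exists a : R, q = a *: unitv i.
Definition SSC (H : 'M[R]_(r, n)) : Prop := SSC1 H /\ SSC2 H.

Definition feasible (H : 'M[R]_(r, n)) (x : 'cV[R]_r) : Prop :=
  [/\ dotv evec x = 1, nonneg_mx (H^T *m x) & forall i, -1 <= x i 0 <= 1].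

Definition is_opt_value (H : 'M[R]_(r, n)) (v : R) : Prop :=
  (exists x, feasible H x /\ norm2 x = v) /\
  (forall x, feasible H x -> norm2 x <= v).

Definition is_opt_solution (H : 'M[R]_(r, n)) (x : 'cV[R]_r) : Prop :=
  feasible H x /\ forall y, feasible H y -> norm2 y <= norm2 x.

End SSCDefs.

(* Main.v *)
Require Import Defs.
From HB Require Import structures.
From mathcomp Require Import all_boot all_order all_algebra.
From mathcomp Require Import reals ring lra.
Import Order.TTheory GRing.Theory Num.Theory.
Local Open Scope ring_scope.
Set Implicit Arguments. Unset Strict Implicit. Unset Printing Implicit Defensive.


Section Sums.
Variables (R : realType) (r : nat).
Local Notation rr := (r%:R : R).

Lemma sum_lin (a b c : R) (u v : 'I_r -> R) :
  \sum_(i < r) (a * u i + b * v i + c) =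
  a * (\sum_i u i) + b * (\sum_i v i) + c * rr.
Proof.
rewrite !big_split /= -!mulr_sumr sumr_const card_ord.
by rewrite -mulr_natr; ring.
Qed.

Lemma sum_sq (a b c : R) (u v : 'I_r -> R) :
  \sum_(i < r) (a * u i + b * v i + c) ^+ 2 =
  a^+2 * (\sum_i u i ^+ 2) + b^+2 * (\sum_i v i ^+ 2) + c^+2 * rr
  + 2 * a * b * (\sum_i u i * v i) + 2 * a * c * (\sum_i u i)
  + 2 * b * c * (\sum_i v i).
Proof.
rewrite (eq_bigr (fun i => a^+2 * u i ^+ 2 + b^+2 * v i ^+2 + c^+2
  + 2*a*b*(u i * v i) + 2*a*c * u i + 2*b*c * v i)); last by move=> i _; ring.
rewrite !big_split /= -!mulr_sumr sumr_const card_ord.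
by rewrite -mulr_natr; ring.
Qed.

Lemma sum_prod (a b c d : R) (u v : 'I_r -> R) :
  \sum_(i < r) ((a * u i + c) * (b * v i + d)) =
  a * b * (\sum_i u i * v i) + a * d * (\sum_i u i) + c * b * (\sum_i v i)
  + c * d * rr.
Proof.
rewrite (eq_bigr (fun i => a*b*(u i * v i) + a*d * u i + c*b * v i + c * d));
  last by move=> i _; ring.
rewrite !big_split /= -!mulr_sumr sumr_const card_ord.
by rewrite -mulr_natr; ring.
Qed.

Lemma sum_pick (F : 'I_r -> R) i : (forall k, k != i -> F k = 0) ->
  \sum_k F k = F i.
Proof. by move=> h; rewrite (bigD1 i) //= big1 ?addr0 // => k /h. Qed.

Lemma sq_le_sum (F : 'I_r -> R) i : F i ^+ 2 <= \sum_k F k ^+ 2.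
Proof.
rewrite (bigD1 i) //= lerDl; apply: sumr_ge0 => k _; exact: sqr_ge0.
Qed.

Lemma sumsq_ge0 (F : 'I_r -> R) : 0 <= \sum_k F k ^+ 2.
Proof. by apply: sumr_ge0 => k _; exact: sqr_ge0. Qed.

Lemma sumsq_eq0 (F : 'I_r -> R) : \sum_k F k ^+ 2 = 0 -> forall i, F i = 0.
Proof.
move=> h i; have := @psumr_eq0P _ _ xpredT (fun k => F k ^+ 2) (fun k _ => sqr_ge0 (F k)) h i isT.
by move/eqP; rewrite sqrf_eq0 => /eqP.
Qed.

Lemma cauchy_schwarz (u v : 'I_r -> R) :
  (\sum_i u i * v i) ^+ 2 <= (\sum_i u i ^+ 2) * (\sum_i v i ^+ 2).
Proof.
have := sum_sq (\sum_i v i ^+ 2) (- \sum_i u i * v i) 0 u v.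
set A := \sum_i u i ^+ 2; set B := \sum_i v i ^+ 2; set P := \sum_i u i * v i.
move=> e.
have B0 : 0 <= B by exact: sumsq_ge0.
have S0 := sumsq_ge0 (fun i => B * u i + - P * v i + 0).
rewrite e in S0.
case: (ltgtP 0 B) => [Bp| |B0'].
- rewrite [X in 0 <= X](_ : _ = B * (A * B - P ^+ 2)) in S0; last by ring.
  by move: S0; rewrite pmulr_rge0 // subr_ge0.
- by move=> h; exfalso; move: B0; rewrite leNgt h.
- have v0 := sumsq_eq0 (esym B0').
  have -> : P = 0 by rewrite /P big1 // => i _; rewrite v0 mulr0.
  by rewrite expr0n /= mulr_ge0 // sumsq_ge0.
Qed.

End Sums.


Section Farkas.
Variables (R : realType) (r : nat).
Local Notation vec := 'cV[R]_r.
Local Notation dot := (@dotv R r).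

Lemma dotvDr (x u v : vec) : dot x (u + v) = dot x u + dot x v.
Proof. rewrite /dotv -big_split /=; apply: eq_bigr => i _; rewrite mxE; ring. Qed.
Lemma dotvBr (x u v : vec) : dot x (u - v) = dot x u - dot x v.
Proof. rewrite /dotv -sumrB /=; apply: eq_bigr => i _; rewrite !mxE /=; ring. Qed.
Lemma dotvZr (x u : vec) c : dot x (c *: u) = c * dot x u.
Proof. rewrite /dotv mulr_sumr; apply: eq_bigr => i _; rewrite !mxE; ring. Qed.
Lemma dotvBl (x u v : vec) : dot (u - v) x = dot u x - dot v x.
Proof. rewrite /dotv -sumrB /=; apply: eq_bigr => i _; rewrite !mxE /=; ring. Qed.
Lemma dotvZl (x u : vec) c : dot (c *: u) x = c * dot u x.
Proof. rewrite /dotv mulr_sumr; apply: eq_bigr => i _; rewrite !mxE; ring. Qed.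
Lemma dotv0r (x : vec) : dot x 0 = 0.
Proof. by rewrite /dotv big1 // => i _; rewrite mxE mulr0. Qed.

Fixpoint cone_seq (s : seq vec) (b : vec) : Prop :=
  if s is a :: s' then exists t, 0 <= t /\ cone_seq s' (b - t *: a) else b = 0.

Lemma cone_seq_dot y s b : all (fun a => 0 <= dot y a) s -> cone_seq s b ->
  0 <= dot y b.
Proof.
elim: s b => [|a s IH] b /=; first by move=> _ ->; rewrite dotv0r.
move=> /andP[ya ys] [t [t0 /(IH _ ys)]].
rewrite dotvBr dotvZr subr_ge0 => h; apply: le_trans h; exact: mulr_ge0.
Qed.

Lemma cone_map y a s : dot y a != 0 -> forall w,
  cone_seq (map (fun v => v - (dot y v / dot y a) *: a) s)
           (w - (dot y w / dot y a) *: a) ->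
  exists u, cone_seq s (w - u *: a).
Proof.
move=> ya; elim: s => [|a1 s IH] w /=.
  by move=> h; exists (dot y w / dot y a).
move=> [t [t0 h]].
have e : w - dot y w / dot y a *: a - t *: (a1 - dot y a1 / dot y a *: a) =
   (w - t *: a1) - (dot y (w - t *: a1) / dot y a) *: a.
  rewrite dotvBr dotvZr; apply/matrixP => i j; rewrite !mxE; ring.
rewrite e in h; have [u hu] := IH _ h.
exists u, t; split => //; by rewrite addrAC.
Qed.

Lemma sumsq_vec0 (b : vec) : dot b b = 0 -> b = 0.
Proof.
move=> h; apply/matrixP => i j; rewrite (ord1 j) mxE.
apply: (sumsq_eq0 (F := fun k => b k 0)); rewrite -[X in _ = X]h /dotv.
by apply: eq_bigr => k _; rewrite expr2.
Qed.

Lemma dotv_self_ge0 (b : vec) : 0 <= dot b b.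
Proof. rewrite /dotv; apply: sumr_ge0 => k _; rewrite -expr2; exact: sqr_ge0. Qed.

Lemma farkas_n m : forall s, size s = m -> forall b,
  cone_seq s b \/ exists y, all (fun a => 0 <= dot y a) s /\ dot y b < 0.
Proof.
elim: m => [|m IH] [|a s] //= hs b.
- have [->|bn] := eqVneq b 0; first by left.
  right; exists (- b); split => //.
  rewrite -scaleN1r dotvZl mulN1r oppr_lt0 lt_def dotv_self_ge0 andbT.
  by apply/eqP => /sumsq_vec0; apply/eqP.
- case: hs => hs.
  have [h|[y [ys yb]]] := IH s hs b.
    by left; exists 0; split => //; rewrite scale0r subr0.
  have [ya|ya] := leP 0 (dot y a).
    by right; exists y; split => //=; rewrite ya.
  have yan : dot y a != 0 by rewrite lt_eqF.
  set f := fun v => v - (dot y v / dot y a) *: a.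
  have hs' : size (map f s) = m by rewrite size_map.
  have [h|[w [ws wb]]] := IH (map f s) hs' (f b).
    have [u hu] := cone_map yan h.
    left; exists u; split => //.
    have := cone_seq_dot ys hu; rewrite dotvBr dotvZr subr_ge0 => h2.
    by nra.
  right; exists (w - (dot w a / dot y a) *: y).
  have key : forall v, dot (w - (dot w a / dot y a) *: y) v = dot w (f v).
    by move=> v; rewrite /f dotvBl dotvZl dotvBr dotvZr; ring.
  split; last by rewrite key.
  rewrite /= key /f dotvBr dotvZr divff // mul1r subrr lexx /=.
  by move: ws; rewrite all_map; apply: sub_all => v /=; rewrite key.
Qed.

Lemma farkas s b :
  cone_seq s b \/ exists y, all (fun a => 0 <= dot y a) s /\ dot y b < 0.
Proof. exact: (farkas_n (erefl (size s))). Qed.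

End Farkas.


Section Conn.
Variables (R : realType) (r n : nat) (H : 'M[R]_(r, n)).
Local Notation vec := 'cV[R]_r.
Local Notation dot := (@dotv R r).

Lemma dotv_evec (x : vec) : dot (evec R r) x = \sum_i x i 0.
Proof. by apply: eq_bigr => i _; rewrite mxE mul1r. Qed.

Lemma dotv_evecr (x : vec) : dot x (evec R r) = \sum_i x i 0.
Proof. by apply: eq_bigr => i _; rewrite mxE mulr1. Qed.

Lemma unitvE (i k : 'I_r) : unitv R i k 0 = (k == i)%:R.
Proof. by rewrite mxE eqxx andbT. Qed.

Lemma dotv_unitv (x : vec) (i : 'I_r) : dot x (unitv R i) = x i 0.
Proof.
rewrite /dotv (sum_pick (i := i)) ?unitvE ?eqxx ?mulr1 // => k ki.
by rewrite unitvE (negbTE ki) mulr0.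
Qed.

Lemma sum_unitv (i : 'I_r) : \sum_k unitv R i k 0 = 1.
Proof.
rewrite (sum_pick (i := i)) ?unitvE ?eqxx // => k ki.
by rewrite unitvE (negbTE ki).
Qed.

Lemma sumsq_unitv (i : 'I_r) : \sum_k unitv R i k 0 ^+ 2 = 1.
Proof.
rewrite (sum_pick (i := i)) ?unitvE ?eqxx ?expr1n // => k ki.
by rewrite unitvE (negbTE ki) expr0n.
Qed.

Lemma dotv_mul (x : vec) (w : 'cV[R]_n) :
  dot x (H *m w) = \sum_(k < n) (H^T *m x) k 0 * w k 0.
Proof.
rewrite /dotv; under eq_bigr => i _ do rewrite mxE mulr_sumr.
rewrite exchange_big /=; apply: eq_bigr => k _.
rewrite mxE mulr_suml; apply: eq_bigr => i _; rewrite !mxE; ring.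
Qed.

Lemma dual_nonneg (x : vec) : in_dual_cone H x <-> nonneg_mx (H^T *m x).
Proof.
split.
- move=> h j k; rewrite (ord1 k).
  have := h (H *m delta_mx j 0).
  rewrite dotv_mul (sum_pick (i := j)).
    rewrite [delta_mx _ _ _ _]mxE eqxx mulr1; apply; exists (delta_mx j 0); split => //.
    by move=> a b; rewrite mxE; exact: ler0n.
  by move=> a aj; rewrite [delta_mx _ _ _ _]mxE (negbTE aj) mulr0.
- move=> h z [w [wn ->]]; rewrite dotv_mul; apply: sumr_ge0 => k _.
  exact: mulr_ge0.
Qed.

Lemma cone_seq_cols (js : seq 'I_n) (x : vec) :
  cone_seq (map (fun j => col j H) js) x -> in_cone H x.
Proof.
elim: js x => [|j js IH] x /=.
  move=> ->; exists 0; split; last by rewrite mulmx0.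
  by move=> a b; rewrite mxE.
move=> [t [t0 /IH [y [yn e]]]].
exists (y + t *: delta_mx j 0); split.
  by move=> a b; rewrite !mxE; apply: addr_ge0 => //; apply: mulr_ge0.
by rewrite mulmxDr -scalemxAr -colE -e subrK.
Qed.

Lemma col_dot (y : vec) j : dot y (col j H) = (H^T *m y) j 0.
Proof. rewrite /dotv mxE; apply: eq_bigr => i _; rewrite !mxE; ring. Qed.

End Conn.


Section Ball.
Variables (R : realType) (r n : nat) (H : 'M[R]_(r, n)).
Local Notation vec := 'cV[R]_r.
Local Notation dot := (@dotv R r).
Local Notation rr := (r%:R : R).

Lemma ssc1_ball : (2 <= r)%N -> SSC1 H -> forall x : vec, in_dual_cone H x ->
  \sum_i x i 0 = 1 -> \sum_i x i 0 ^+ 2 <= 1.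
Proof.
move=> Hr S1 x hx Sx.
set X := \sum_i x i 0 ^+ 2.
case: (leP X 1) => // X1; exfalso.
have rr2 : 2 <= rr by rewrite (ler_nat R 2 r).
set w := Num.sqrt ((rr - 1) * (rr * X - 1)).
have w0 : 0 <= w by exact: sqrtr_ge0.
have w2 : w ^+ 2 = (rr - 1) * (rr * X - 1).
  by rewrite sqr_sqrtr //; apply: mulr_ge0; nra.
have rn0 : rr != 0 by apply/eqP => h; move: rr2; rewrite h; lra.
set al := (1 + w) / rr.
have alr : al * rr = 1 + w by rewrite /al divfK.
set z := al *: evec R r - x.
have zi : forall i, z i 0 = (-1) * x i 0 + 0 * x i 0 + al.
  by move=> i; rewrite !mxE; ring.
have Sz : \sum_i z i 0 = w.
  under eq_bigr => i _ do rewrite zi.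
  rewrite sum_lin Sx; lra.
have Qz : \sum_i z i 0 ^+ 2 = rr * X - 1.
  under eq_bigr => i _ do rewrite zi.
  rewrite sum_sq Sx -/X.
  have e : rr * (al ^+ 2 * rr - 2 * al) = rr * (rr * X - X - 1).
    have -> : rr * (al ^+ 2 * rr - 2 * al) = (al * rr) ^+ 2 - 2 * (al * rr) by ring.
    rewrite alr; nra.
  have e2 : al ^+ 2 * rr - 2 * al = rr * X - X - 1 by apply: (mulfI rn0).
  nra.
have zC : in_C z.
  rewrite /in_C /norm2 dotv_evec Sz Qz -sqrtrM; last lra.
  by rewrite -/w.
have := hx z (S1 z zC).
have -> : dot x z = al * 1 + (-1) * X.
  rewrite /dotv (eq_bigr (fun i => al * x i 0 + (-1) * x i 0 ^+ 2 + 0)); last first.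
    by move=> i _; rewrite zi; ring.
  rewrite (sum_lin al (-1) 0 (fun i => x i 0) (fun i => x i 0 ^+ 2)) Sx -/X; ring.
move=> h.
have h1 : rr * X - 1 <= w by nra.
have h2 : (rr * X - 1) ^+ 2 <= w ^+ 2.
  rewrite ler_sqr // ?nnegrE //; nra.
rewrite w2 in h2.
have h3 : rr - 1 < rr * X - 1 by nra.
have h4 : 0 < rr * X - 1 by nra.
have h5 : (rr - 1) * (rr * X - 1) < (rr * X - 1) * (rr * X - 1) by rewrite ltr_pM2r.
move: h2; rewrite expr2; lra.
Qed.

End Ball.


Section Conv.
Variables (R : realType) (r n : nat) (H : 'M[R]_(r, n)).
Local Notation vec := 'cV[R]_r.
Local Notation dot := (@dotv R r).
Local Notation rr := (r%:R : R).

Lemma norm2_le1 (z : vec) : (norm2 z <= 1) = (\sum_i z i 0 ^+ 2 <= 1).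
Proof. by rewrite /norm2 -[X in _ <= X]sqrtr1 ler_sqrt. Qed.

Lemma feas_of (z : vec) : nonneg_mx (H^T *m z) -> \sum_i z i 0 = 1 ->
  \sum_i z i 0 ^+ 2 <= 1 -> feasible H z.
Proof.
move=> hz Sz Qz; split => //; first by rewrite dotv_evec.
move=> i; have := sq_le_sum (fun k => z k 0) i => /= h.
by apply/andP; split; nra.
Qed.

Lemma nonneg_comb (a b : R) (y : vec) : nonneg_mx H -> 0 <= a -> 0 <= b ->
  nonneg_mx (H^T *m y) -> nonneg_mx (H^T *m (a *: evec R r + b *: y)).
Proof.
move=> Hnn a0 b0 hy j k; have := hy j k.
rewrite mulmxDr -!scalemxAr !mxE => hjk.
apply: addr_ge0; apply: mulr_ge0 => //.
apply: sumr_ge0 => i _; rewrite !mxE; apply: mulr_ge0 => //.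
Qed.

Variables (Hr : (2 <= r)%N) (Hnn : nonneg_mx H)
  (h1 : forall i, in_cone H (evec R r - unitv R i))
  (hopt : forall x, feasible H x -> norm2 x <= 1)
  (hsol : forall x, is_opt_solution H x -> exists i, x = unitv R i).

Lemma le_sum (z : vec) i : nonneg_mx (H^T *m z) -> z i 0 <= \sum_k z k 0.
Proof.
move=> hz; have := (proj2 (dual_nonneg H z) hz) _ (h1 i).
by rewrite dotvBr dotv_evecr dotv_unitv subr_ge0.
Qed.

Lemma conv_ball (y : vec) : nonneg_mx (H^T *m y) -> \sum_i y i 0 = 1 ->
  \sum_i y i 0 ^+ 2 <= 1.
Proof.
move=> hy Sy.
set Y := \sum_i y i 0 ^+ 2.
case: (leP Y 1) => // Y1; exfalso.
have rr2 : 2 <= rr by rewrite (ler_nat R 2 r).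
have rn0 : rr != 0 by apply/eqP => h; move: rr2; rewrite h; lra.
set c := rr^-1.
have rc : rr * c = 1 by rewrite /c divff.
have c0 : 0 < c by rewrite /c invr_gt0; lra.
have c1 : c < 1 by nra.
pose zt t := ((1 - t) * c) *: evec R r + t *: y.
have zti : forall t i, zt t i 0 = t * y i 0 + 0 * y i 0 + (1 - t) * c.
  by move=> t i; rewrite !mxE; ring.
have Szt : forall t, \sum_i zt t i 0 = 1.
  move=> t; under eq_bigr => i _ do rewrite zti.
  rewrite sum_lin Sy.
  have -> : (1 - t) * c * rr = (1 - t) * (rr * c) by ring.
  rewrite rc; ring.
have Qzt : forall t, \sum_i zt t i 0 ^+ 2 = c + t ^+ 2 * (Y - c).
  move=> t; under eq_bigr => i _ do rewrite zti.
  rewrite sum_sq Sy -/Y.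
  have -> : ((1 - t) * c) ^+ 2 * rr = (rr * c) * c * (1 - t) ^+ 2 by ring.
  rewrite rc; ring.
have Hzt : forall t, 0 <= t <= 1 -> nonneg_mx (H^T *m zt t).
  move=> t /andP[t0 t1]; apply: nonneg_comb => //; nra.
set t1 := Num.sqrt ((1 - c) / (Y - c)).
have Yc : 0 < Y - c by lra.
have t10 : 0 <= t1 by exact: sqrtr_ge0.
have t1sq : t1 ^+ 2 = (1 - c) / (Y - c).
  rewrite sqr_sqrtr // divr_ge0 //; lra.
have t1e : t1 ^+ 2 * (Y - c) = 1 - c.
  by rewrite t1sq divfK //; apply/eqP => h; move: Yc; rewrite h; lra.
have t11 : t1 < 1.
  case: (ltP t1 1) => // h; exfalso.
  have h2 : 1 <= t1 ^+ 2 by rewrite expr2; nra.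
  have h3 : 0 <= (t1 ^+ 2 - 1) * (Y - c) by apply: mulr_ge0; lra.
  move: h3; rewrite mulrBl t1e; lra.
have Qz1 : \sum_i zt t1 i 0 ^+ 2 = 1 by rewrite Qzt t1e; ring.
have Hz1 : nonneg_mx (H^T *m zt t1) by apply: Hzt; rewrite t10 ltW.
have Fz1 : feasible H (zt t1) by apply: feas_of => //; rewrite Qz1.
have [k zk] : exists k, zt t1 = unitv R k.
  apply: hsol; split => // x fx.
  by rewrite /norm2 Qz1 sqrtr1; exact: hopt.
set d := (1 - t1) / (2 + Y).
have Y0 : 0 <= Y by exact: sumsq_ge0.
have d0 : 0 < d by rewrite /d divr_gt0 //; lra.
have dY : d * (2 + Y) = 1 - t1 by rewrite /d divfK //; apply/eqP => h; lra.
have t2le : t1 + d <= 1 by nra.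
have Hz2 : nonneg_mx (H^T *m zt (t1 + d)).
  by apply: Hzt; apply/andP; split; lra.
have Fz2 : feasible H (zt (t1 + d)).
  split => //; first by rewrite dotv_evec.
  move=> i; apply/andP; split; last first.
    by rewrite -(Szt (t1 + d)); exact: le_sum.
  have e1 : zt t1 i 0 = unitv R k i 0 by rewrite zk.
  have u0 : 0 <= unitv R k i 0 by rewrite unitvE ler0n.
  have yi : y i 0 ^+ 2 <= Y by exact: (sq_le_sum (fun j => y j 0) i).
  have e2 : zt (t1 + d) i 0 = zt t1 i 0 + d * (y i 0 - c) by rewrite !zti; ring.
  have yl : - y i 0 <= 1 + Y by nra.
  have h3 : d * (c - y i 0) <= d * (2 + Y) by rewrite ler_pM2l //; lra.
  rewrite e2 e1; nra.
have := hopt Fz2; rewrite norm2_le1 Qzt.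
have h4 : t1 ^+ 2 < (t1 + d) ^+ 2 by rewrite !expr2; nra.
have h5 : t1 ^+ 2 * (Y - c) < (t1 + d) ^+ 2 * (Y - c) by rewrite ltr_pM2r.
lra.
Qed.

End Conv.


Section Pair.
Variables (R : realType) (r : nat).
Local Notation vec := 'cV[R]_r.
Local Notation dot := (@dotv R r).
Local Notation rr := (r%:R : R).

Lemma sum_sq1 (a c : R) (u : 'I_r -> R) :
  \sum_(i < r) (a * u i + c) ^+ 2 =
  a ^+ 2 * (\sum_i u i ^+ 2) + 2 * a * c * (\sum_i u i) + c ^+ 2 * rr.
Proof.
under eq_bigr => i _ do rewrite expr2.
rewrite sum_prod.
have -> : \sum_i u i * u i = \sum_i u i ^+ 2 by apply: eq_bigr => i _; rewrite expr2.
ring.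
Qed.

Lemma pair_nonneg (q x : vec) : (2 <= r)%N ->
  0 <= \sum_i q i 0 -> \sum_i q i 0 ^+ 2 <= (\sum_i q i 0) ^+ 2 ->
  0 <= \sum_i x i 0 -> (rr - 1) * \sum_i x i 0 ^+ 2 <= (\sum_i x i 0) ^+ 2 ->
  0 <= dot q x.
Proof.
move=> Hr.
set s := \sum_i q i 0; set Q := \sum_i q i 0 ^+ 2.
set t := \sum_i x i 0; set X := \sum_i x i 0 ^+ 2.
move=> s0 Qs t0 Xt.
have rr2 : 2 <= rr by rewrite (ler_nat R 2 r).
have CS := cauchy_schwarz (fun i => rr * q i 0 + - s) (fun i => rr * x i 0 + - t).
rewrite (sum_prod rr rr (- s) (- t) (fun i => q i 0) (fun i => x i 0)) in CS.
rewrite (sum_sq1 rr (- s) (fun i => q i 0)) (sum_sq1 rr (- t) (fun i => x i 0)) in CS.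
rewrite -/s -/t -/Q -/X in CS.
set P := \sum_i q i 0 * x i 0 in CS.
have CSq := cauchy_schwarz (fun i => q i 0) (fun _ => 1).
have CSx := cauchy_schwarz (fun i => x i 0) (fun _ => 1).
rewrite /= (eq_bigr (fun i => q i 0)) ?sumr_const ?card_ord ?expr1n -/Q -/s in CSq;
  last by move=> i _; rewrite mulr1.
rewrite /= (eq_bigr (fun i => x i 0)) ?sumr_const ?card_ord ?expr1n -/X -/t in CSx;
  last by move=> i _; rewrite mulr1.
set D := rr * P - s * t.
set A := rr * Q - s ^+ 2.
set B := rr * X - t ^+ 2.
have CS2 : rr ^+ 2 * D ^+ 2 <= rr ^+ 2 * (A * B).
  move: CS; rewrite /D /A /B.
  have -> : (rr * rr * P + rr * - t * s + - s * rr * t + - s * - t * rr) ^+ 2 =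
     rr ^+ 2 * (rr * P - s * t) ^+ 2 by ring.
  have -> : (rr ^+ 2 * Q + 2 * rr * - s * s + (- s) ^+ 2 * rr) *
            (rr ^+ 2 * X + 2 * rr * - t * t + (- t) ^+ 2 * rr) =
     rr ^+ 2 * ((rr * Q - s ^+ 2) * (rr * X - t ^+ 2)) by ring.
  done.
have rp : 0 < rr ^+ 2 by apply: exprn_gt0; lra.
have DAB : D ^+ 2 <= A * B by move: CS2; rewrite ler_pM2l.
have A0 : 0 <= A by rewrite /A subr_ge0 mulrC.
have B0 : 0 <= B by rewrite /B subr_ge0 mulrC.
have As : A <= (rr - 1) * s ^+ 2 by rewrite /A; nra.
have Bt : (rr - 1) * B <= t ^+ 2 by rewrite /B; nra.
have h1 : (rr - 1) * D ^+ 2 <= (rr - 1) * (A * B) by rewrite ler_pM2l //; lra.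
have h2 : (rr - 1) * (A * B) <= A * t ^+ 2.
  have -> : (rr - 1) * (A * B) = A * ((rr - 1) * B) by ring.
  by rewrite ler_wpM2l.
have h3 : A * t ^+ 2 <= (rr - 1) * s ^+ 2 * t ^+ 2 by rewrite ler_wpM2r // sqr_ge0.
have h4 : D ^+ 2 <= (s * t) ^+ 2.
  have : (rr - 1) * D ^+ 2 <= (rr - 1) * (s * t) ^+ 2.
    by rewrite exprMn mulrA; lra.
  by rewrite ler_pM2l //; lra.
have st0 : 0 <= s * t by exact: mulr_ge0.
have h5 : - (s * t) <= D.
  move: h4; rewrite -ler_sqrt ?sqr_ge0 // !sqrtr_sqr [`|s * t|]ger0_norm // => h4.
  by move: (ler_norm (- D)); rewrite normrN; lra.
have : 0 <= rr * P by rewrite /D in h5; lra.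
by rewrite pmulr_rge0 //; lra.
Qed.

End Pair.


Section Cstar.
Variables (R : realType) (r n : nat) (H : 'M[R]_(r, n)).
Local Notation vec := 'cV[R]_r.
Local Notation dot := (@dotv R r).
Local Notation rr := (r%:R : R).
Variables (Hr : (2 <= r)%N) (Hnn : nonneg_mx H)
  (h1 : forall i, in_cone H (evec R r - unitv R i))
  (hopt : forall x, feasible H x -> norm2 x <= 1)
  (hsol : forall x, is_opt_solution H x -> exists i, x = unitv R i).

Lemma cstar (q : vec) : nonneg_mx (H^T *m q) ->
  0 <= \sum_i q i 0 /\ \sum_i q i 0 ^+ 2 <= (\sum_i q i 0) ^+ 2.
Proof.
move=> hq; set s := \sum_i q i 0.
have rr2 : 2 <= rr by rewrite (ler_nat R 2 r).
have le : forall i, q i 0 <= s by move=> i; exact: (le_sum h1).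
have Ss : \sum_i (s - q i 0) = (rr - 1) * s.
  rewrite (eq_bigr (fun i => (-1) * q i 0 + 0 * q i 0 + s)); last by move=> i _; ring.
  rewrite sum_lin -/s; ring.
have s0 : 0 <= s.
  have : 0 <= \sum_i (s - q i 0) by apply: sumr_ge0 => i _; rewrite subr_ge0.
  rewrite Ss => h; nra.
have le' : forall i, 0 <= s - q i 0 by move=> i; rewrite subr_ge0.
case: (eqVneq s 0) => [se|sn].
  have qi : forall i, q i 0 = 0.
    move=> i; have := @psumr_eq0P _ _ xpredT (fun i => s - q i 0)
       (fun i _ => le' i) _ i isT.
    rewrite Ss se mulr0 => /(_ erefl); lra.
  split; first lra.
  rewrite se big1; first by rewrite expr0n.
  by move=> i _; rewrite qi expr0n.
have sp : 0 < s by rewrite lt_def sn.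
set y := s^-1 *: q.
have hy : nonneg_mx (H^T *m y).
  by move=> j k; rewrite /y -scalemxAr mxE; apply: mulr_ge0 => //; rewrite invr_ge0.
have Sy : \sum_i y i 0 = 1.
  rewrite (eq_bigr (fun i => s^-1 * q i 0)); last by move=> i _; rewrite mxE.
  by rewrite -mulr_sumr -/s mulVf.
have := conv_ball Hr Hnn h1 hopt hsol hy Sy.
rewrite (eq_bigr (fun i => s^-1 ^+ 2 * q i 0 ^+ 2)); last by move=> i _; rewrite mxE exprMn.
rewrite -mulr_sumr => h.
split => //.
have -> : \sum_i q i 0 ^+ 2 = s ^+ 2 * (s^-1 ^+ 2 * \sum_i q i 0 ^+ 2).
  by rewrite mulrA -exprMn divff // expr1n mul1r.
have : 0 <= s ^+ 2 by exact: sqr_ge0.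
nra.
Qed.

End Cstar.

Unset Implicit Arguments. Set Strict Implicit.

Theorem theorem2 (R : realType) (r n : nat) (Hr : (2 <= r)%N)
    (H : 'M[R]_(r, n)) (Hnn : nonneg_mx H) :
  SSC H <->
  ((forall i : 'I_r, in_cone H (evec R r - unitv R i)) /\
   (is_opt_value H 1 /\
    forall x : 'cV[R]_r, is_opt_solution H x <-> exists i : 'I_r, x = unitv R i)).
Proof.
have r0 : (0 < r)%N by apply: leq_trans Hr.
pose i0 : 'I_r := Ordinal r0.
have rr2 : 2 <= (r%:R : R) by rewrite (ler_nat R 2 r).
have Funit : forall i : 'I_r, feasible H (unitv R i).
  move=> i; split.
  - by rewrite dotv_evec sum_unitv.
  - move=> j k; rewrite mxE; apply: sumr_ge0 => l _; rewrite !mxE.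
    by apply: mulr_ge0 => //; exact: ler0n.
  - move=> j; rewrite unitvE; case: (j == i); rewrite /= ?mulr1n ?mulr0n;
      apply/andP; split; lra.
have Nunit : forall i : 'I_r, norm2 (unitv R i) = 1.
  by move=> i; rewrite /norm2 sumsq_unitv sqrtr1.
split.
- move=> [S1 S2].
  have ball : forall x, feasible H x -> norm2 x <= 1.
    move=> x [Sx hx _]; rewrite norm2_le1; apply: (ssc1_ball Hr S1).
      exact/dual_nonneg.
    by rewrite -dotv_evec.
  split.
    move=> i; apply: S1; rewrite /in_C /norm2 dotv_evec.
    have ei : forall k, (evec R r - unitv R i) k 0 =
        (-1) * unitv R i k 0 + 0 * unitv R i k 0 + 1.
      by move=> k; rewrite !mxE; ring.
    have ei2 : forall k, (evec R r - unitv R i) k 0 ^+ 2 =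
        (-1) * unitv R i k 0 + 0 * unitv R i k 0 + 1.
      move=> k; rewrite ei unitvE; case: (k == i); rewrite /= ?mulr1n ?mulr0n; ring.
    rewrite (eq_bigr _ (fun k _ => ei k)) (eq_bigr _ (fun k _ => ei2 k)).
    rewrite (sum_lin (-1) 0 1 (fun k => unitv R i k 0) (fun k => unitv R i k 0)).
    rewrite sum_unitv (_ : -1 * 1 + 0 * 1 + 1 * (r%:R : R) = r%:R - 1); last by ring.
    rewrite -expr2 sqr_sqrtr; lra.
  split.
    split; last exact: ball.
    by exists (unitv R i0); split => //; rewrite Nunit.
  move=> x; split.
    move=> [Fx mx].
    have n1 : norm2 x = 1.
      by apply/le_anti; rewrite ball //= -(Nunit i0) mx.
    have [Sx hx _] := Fx.
    have Sn : dotv (evec R r) x = norm2 x by rewrite Sx n1.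
    have [i [a e]] := S2 x (proj2 (dual_nonneg H x) hx) Sn.
    exists i; move: Sx; rewrite e dotvZr dotv_evec sum_unitv mulr1 => ->.
    by rewrite scale1r.
  move=> [i ->]; split => // y Fy; rewrite Nunit; exact: ball.
- move=> [h1 [[_ hopt] hsol']].
  have hsol : forall x, is_opt_solution H x -> exists i : 'I_r, x = unitv R i.
    by move=> x /hsol'.
  split.
    move=> x xC.
    have [h|[y [ys yneg]]] := farkas (map (fun j => col j H) (enum 'I_n)) x.
      exact: cone_seq_cols h.
    exfalso.
    have hy : nonneg_mx (H^T *m y).
      move=> j k; rewrite (ord1 k) -col_dot.
      by move: ys; rewrite all_map => /allP /(_ j (mem_enum _ j)).
    have [s0 Qs] := cstar Hr Hnn h1 hopt hsol hy.
    move: xC; rewrite /in_C /norm2 dotv_evec => xC.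
    set t := \sum_i x i 0 in xC.
    set X := \sum_i x i 0 ^+ 2 in xC.
    have a0 : 0 <= Num.sqrt ((r%:R : R) - 1) * Num.sqrt X
      by apply: mulr_ge0; exact: sqrtr_ge0.
    have t0 : 0 <= t by exact: le_trans xC.
    have : (Num.sqrt ((r%:R : R) - 1) * Num.sqrt X) ^+ 2 <= t ^+ 2.
      by rewrite ler_sqr ?nnegrE.
    have X0 : 0 <= X by exact: sumsq_ge0.
    have r1 : 0 <= (r%:R : R) - 1 by lra.
    rewrite exprMn !sqr_sqrtr // => Xt.
    have := pair_nonneg Hr s0 Qs t0 Xt.
    by rewrite leNgt yneg.
  move=> q hq Sq.
  have hqn := proj1 (dual_nonneg H q) hq.
  rewrite dotv_evec in Sq.
  set s := \sum_i q i 0 in Sq.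
  set Q := \sum_i q i 0 ^+ 2 in Sq.
  have Q0 : 0 <= Q by exact: sumsq_ge0.
  have Qs : Q = s ^+ 2 by rewrite Sq /norm2 sqr_sqrtr.
  case: (eqVneq s 0) => [se|sn].
    have Q00 : Q = 0 by rewrite Qs se expr0n.
    have qi := sumsq_eq0 (F := fun k => q k 0) Q00.
    exists i0, 0; rewrite scale0r; apply/matrixP => a b.
    by rewrite (ord1 b) mxE qi.
  have sp : 0 < s by rewrite lt_def sn Sq sqrtr_ge0.
  set y := s^-1 *: q.
  have hy : nonneg_mx (H^T *m y).
    by move=> j k; rewrite /y -scalemxAr mxE; apply: mulr_ge0 => //; rewrite invr_ge0 ltW.
  have Sy : \sum_i y i 0 = 1.
    rewrite (eq_bigr (fun i => s^-1 * q i 0)); last by move=> i _; rewrite mxE.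
    by rewrite -mulr_sumr -/s mulVf.
  have Qy : \sum_i y i 0 ^+ 2 = 1.
    rewrite (eq_bigr (fun i => s^-1 ^+ 2 * q i 0 ^+ 2)); last by move=> i _; rewrite mxE exprMn.
    by rewrite -mulr_sumr -/Q Qs -exprMn mulVf // expr1n.
  have Fy : feasible H y by apply: feas_of => //; rewrite Qy.
  have [k yk] : exists k, y = unitv R k.
    apply: hsol; split => // z Fz.
    by rewrite /norm2 Qy sqrtr1; exact: hopt.
  exists k, s; rewrite -yk /y scalerA divff ?scale1r //.
Qed.
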